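(* (i) If $r+s=0$, then $a^*_i=\frac{d-r}{2}$ for $0\le i\le d-1$ and $a^*_d=\frac{d(r+1)}{2}$. (ii) If $r-s=0$, then $a^*_i=\frac d2$ for $0\le i\le d$.
   Context: Fix an integer $d\ge0$ and $r,s\in(-1,\infty)$. Write $(x)_i=x(x+1)\cdots(x+i-1)$, $(x)_0=1$. For $0\le i\le d$ put $\theta^*_i=i$. Put $b^*_i=\frac{(d-i)(i-d-s)(2d-2i+r+s+2)_i}{(2d-2i+r+s)_{i+1}}$ ($0\le i\le d-1$), $c^*_i=\frac{i(i-d-r-1)(d-i+r+s+1)_{d-i}}{(d-i+r+s+2)_{d-i+1}}$ ($1\le i\le d$), $b^*_d=c^*_0=0$, and $a^*_i=\theta^*_0-b^*_i-c^*_i$ for $0\le i\le d$. *)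

(* Defs.v *)
From HB Require Import structures.
From mathcomp Require Import all_boot all_order all_algebra.
Set Implicit Arguments. Unset Strict Implicit. Unset Printing Implicit Defensive.
Import Order.TTheory GRing.Theory Num.Theory.
Local Open Scope ring_scope.

Definition poch (R : pzRingType) (x : R) (i : nat) : R :=
  \prod_(k < i) (x + k%:R).

Definition thetastar (R : pzRingType) (i : nat) : R := i%:R.

Definition bstar (R : fieldType) (d : nat) (r s : R) (i : nat) : R :=
  if (i < d)%N then
    ((d%:R - i%:R) * (i%:R - d%:R - s)
       * poch (2 * d%:R - 2 * i%:R + r + s + 2) i)
    / poch (2 * d%:R - 2 * i%:R + r + s) i.+1
  else 0.

Definition cstar (R : fieldType) (d : nat) (r s : R) (i : nat) : R :=
  if (0 < i <= d)%N then
    (i%:R * (i%:R - d%:R - r - 1)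
       * poch (d%:R - i%:R + r + s + 1) (d - i))
    / poch (d%:R - i%:R + r + s + 2) (d - i).+1
  else 0.

Definition astar (R : fieldType) (d : nat) (r s : R) (i : nat) : R :=
  thetastar R 0 - bstar d r s i - cstar d r s i.

(* Main.v *)
Require Import Defs.
From HB Require Import structures.
From mathcomp Require Import all_boot all_order all_algebra.
From mathcomp Require Import ring lra zify.
Import Order.TTheory GRing.Theory Num.Theory.
Local Open Scope ring_scope.

Section S.
Variable R : realFieldType.

Lemma poch_recl (x : R) n : poch x n.+1 = x * poch (x+1) n.
Proof.
rewrite /poch big_ord_recl /= addr0; congr (_ * _).
apply: eq_bigr => k _; rewrite /bump /= -natr1; ring.
Qed.

Lemma poch_recr (x : R) n : poch x n.+1 = poch x n * (x + n%:R).
Proof. by rewrite /poch big_ord_recr. Qed.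

Lemma poch_gt0 (x : R) n : 0 < x -> 0 < poch x n.
Proof.
move=> hx; rewrite /poch; apply: prodr_gt0 => k _.
have : 0 <= k%:R :> R by rewrite ler0n.
lra.
Qed.

Lemma ratio_b (x : R) i : 0 < x ->
  poch (x+2) i / poch x i.+1 = (x + i%:R + 1)/(x*(x+1)).
Proof.
move=> hx.
have e1 : poch x i.+2 = x * (x+1) * poch (x+2) i.
  by rewrite poch_recl poch_recl -mulrA -addrA.
have e2 : poch x i.+2 = poch x i.+1 * (x + i%:R + 1).
  by rewrite poch_recr -natr1; congr (_ * _); ring.
have p1 := @poch_gt0 x i.+1 hx.
have hn : 0 <= i%:R :> R by rewrite ler0n.
have h1 : poch (x+2) i = poch x i.+1 * (x + i%:R + 1) / (x * (x+1)).
  rewrite -e2 e1; field; apply/andP; split; apply/eqP; lra.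
rewrite h1; field; apply/and3P; split; apply/eqP; lra.
Qed.

Lemma ratio_c (y : R) m : 0 < y ->
  poch y m / poch (y+1) m.+1 = y/((y+m%:R)*(y+m%:R+1)).
Proof.
move=> hy.
have hn : 0 <= m%:R :> R by rewrite ler0n.
have e1 : poch y m * (y + m%:R) = y * poch (y+1) m by rewrite -poch_recr poch_recl.
have e2 : poch (y+1) m.+1 = poch (y+1) m * (y+m%:R+1).
  by rewrite poch_recr; congr (_ * _); ring.
have q : 0 < poch (y+1) m by apply: poch_gt0; lra.
have h1 : poch y m = y * poch (y+1) m / (y + m%:R).
  rewrite -e1; field; apply/eqP; lra.
rewrite h1 e2; field; apply/and3P; split; apply/eqP; lra.
Qed.

Lemma bstar_eq (r s : R) i n : -1 < r -> -1 < s ->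
  bstar (i + n.+1) r s i =
  (n.+1%:R * (- n.+1%:R - s)) *
    ((2 * n.+1%:R + r + s + i%:R + 1) / ((2 * n.+1%:R + r + s) * (2 * n.+1%:R + r + s + 1))).
Proof.
move=> hr hs; rewrite /bstar ifT; last by rewrite -addSnnS leq_addr.
have hn : 0 <= n%:R :> R by rewrite ler0n.
have -> : 2 * (i + n.+1)%:R - 2 * i%:R + r + s = 2 * n.+1%:R + r + s.
  by rewrite natrD; ring.
have -> : (i + n.+1)%:R - i%:R = n.+1%:R :> R by rewrite natrD; ring.
have -> : i%:R - (i + n.+1)%:R - s = - n.+1%:R - s :> R by rewrite natrD; ring.
rewrite -mulrA ratio_b //; rewrite -natr1; lra.
Qed.

Lemma cstar_eq (r s : R) i n : -1 < r -> -1 < s ->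
  cstar (i + n.+1) r s i =
  (i%:R * (- n.+1%:R - r - 1)) *
    ((n.+1%:R + r + s + 1) / ((n.+1%:R + r + s + 1 + n.+1%:R) * (n.+1%:R + r + s + 1 + n.+1%:R + 1))).
Proof.
move=> hr hs; rewrite /cstar.
have hn : 0 <= n%:R :> R by rewrite ler0n.
case: i => [|i]; first by rewrite /= !mul0r.
rewrite ifT; last by rewrite /= leq_addr.
have -> : (i.+1 + n.+1 - i.+1 = n.+1)%N by rewrite addKn.
have -> : (i.+1 + n.+1)%:R - i.+1%:R + r + s + 2 = (n.+1%:R + r + s + 1) + 1 :> R.
  by rewrite natrD; ring.
have -> : (i.+1 + n.+1)%:R - i.+1%:R + r + s + 1 = (n.+1%:R + r + s + 1) :> R.
  by rewrite natrD; ring.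
have -> : i.+1%:R - (i.+1 + n.+1)%:R - r - 1 = - n.+1%:R - r - 1 :> R.
  by rewrite natrD; ring.
rewrite -mulrA ratio_c //; rewrite -natr1; lra.
Qed.

Lemma astar_d (r s : R) d : -1 < r -> -1 < s ->
  astar d r s d = d%:R * (r + 1) / (r + s + 2).
Proof.
move=> hr hs; rewrite /astar /bstar /cstar ltnn leqnn andbT subnn /thetastar.
rewrite /poch big_ord0 big_ord1 /=.
case: d => [|d] /=; first by rewrite !mul0r !subr0.
have -> : d.+1%:R - d.+1%:R + r + s + 2 + 0 = r + s + 2 :> R by ring.
rewrite mulr1; field; apply/eqP; lra.
Qed.

End S.

Theorem lemma2p7 (R : realFieldType) (d : nat) (r s : R) :
  -1 < r -> -1 < s ->
  (r + s = 0 ->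
     (forall i : nat, (i < d)%N -> astar d r s i = (d%:R - r) / 2) /\
     astar d r s d = d%:R * (r + 1) / 2) /\
  (r - s = 0 ->
     forall i : nat, (i <= d)%N -> astar d r s i = d%:R / 2).
Proof.
move=> hr hs.
have gen : forall i, (i < d)%N -> exists n, d = (i + n.+1)%N.
  by move=> i hi; exists (d - i.+1)%N; lia.
split.
- move=> hrs; have -> : s = - r by lra.
  split.
  + move=> i /gen [n ->].
    rewrite /astar bstar_eq ?cstar_eq /thetastar; try lra.
    have hN : 0 <= n%:R :> R by rewrite ler0n.
    rewrite -!natr1 natrD -natr1.
    field; repeat (apply/andP; split); apply/eqP; lra.
  + rewrite astar_d; try lra.
    have -> : r + - r + 2 = 2 :> R by ring.
    done.
- move=> hrs; have -> : s = r by lra.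
  move=> i; rewrite leq_eqVlt => /orP [/eqP ->|].
  + rewrite astar_d //; field; apply/eqP; lra.
  + move=> /gen [n ->].
    rewrite /astar bstar_eq ?cstar_eq /thetastar //.
    have hN : 0 <= n%:R :> R by rewrite ler0n.
    rewrite -!natr1 natrD -natr1.
    field; repeat (apply/andP; split); apply/eqP; lra.
Qed.
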